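(* Let $\sim$ be a right congruence of finite index on $\Sigma^*$ with suffix expansion $\approx$. If $\sim$ has a critical tuple, then $|\Sigma^{\le n}/{\approx}|$ grows exponentially, and there exists a critical tuple $(u_2,v_2,u,v)$ in $\sim$ such that $u_2u\sim u_2wu$ and $v_2u\sim v_2wu$ for all $w\in\{u,v\}^*$.
   Context: Suffix expansion: $a_1\cdots a_n\approx b_1\cdots b_m$ iff $n=m$ and $a_i\cdots a_n\sim b_i\cdots b_n$ for all $i$. A critical tuple in a right congruence $\sim$ is $(u_2,v_2,u,v)$ with $|u_2|=|v_2|\ge1$, $u=u_1u_2$, $v=v_1v_2$ for some $u_1,v_1$, and $u_2w\not\sim v_2w$ for all $w\in\{u,v\}^*$. Exponential growth of $\gamma$: $\gamma(n)\ge c^n$ for some $c>1$ and infinitely many $n$. *)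

(* Defs.v *)
From HB Require Import structures.
From mathcomp Require Import all_boot all_order all_algebra.
From mathcomp Require Import reals.
Set Implicit Arguments. Unset Strict Implicit. Unset Printing Implicit Defensive.
Import Order.TTheory GRing.Theory Num.Theory.

Section Defs.
Variable Sigma : finType.
Implicit Types (sim : rel (seq Sigma)) (u v w : seq Sigma).

Definition right_congruence sim : Prop :=
  [/\ (forall u, sim u u),
      (forall u v, sim u v -> sim v u),
      (forall u v w, sim u v -> sim v w -> sim u w) &
      (forall u v w, sim u v -> sim (u ++ w) (v ++ w))].

Definition finite_index sim : Prop :=
  exists reps : seq (seq Sigma), forall w, exists2 r, r \in reps & sim w r.

(* suffix expansion: a_1..a_n ≈ b_1..b_m iff n = m and
   a_i..a_n ~ b_i..b_n for all i (i ranging over 1..n, i.e. drop (i-1)). *)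
Definition suffix_expansion sim : rel (seq Sigma) :=
  fun a b => (size a == size b) &&
             [forall i : 'I_(size a), sim (drop i a) (drop i b)].

Definition words_upto (n : nat) : seq (seq Sigma) :=
  flatten [seq [seq val t | t <- enum {: k.-tuple Sigma}] | k <- iota 0 n.+1].

(* |Sigma^{<=n} / r| : the number of r-classes among words of length <= n,
   each class being represented by its (finite) set of members. *)
Definition num_classes (r : rel (seq Sigma)) (n : nat) : nat :=
  let W := words_upto n in
  size (undup [seq [seq y <- W | r x y] | x <- W]).

Definition in_star2 u v w : Prop :=
  exists s : seq bool, w = flatten [seq if b then u else v | b <- s].

Definition critical_tuple sim (u2 v2 u v : seq Sigma) : Prop :=
  [/\ size u2 = size v2, (1 <= size u2)%N,
      (exists u1, u = u1 ++ u2), (exists v1, v = v1 ++ v2) &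
      (forall w, in_star2 u v w -> ~~ sim (u2 ++ w) (v2 ++ w))].

End Defs.

Definition exp_growth (R : realType) (gamma : nat -> nat) : Prop :=
  exists c : R, (1 < c)%R /\
    forall N : nat, exists n : nat, (N <= n)%N /\ (c ^+ n <= (gamma n)%:R)%R.

(* Main.v *)
Require Import Defs.
From HB Require Import structures.
From mathcomp Require Import all_boot all_order all_algebra.
From mathcomp Require Import reals.
From mathcomp Require Import ring lra zify.
From Stdlib Require Import Classical.
Set Implicit Arguments. Unset Strict Implicit. Unset Printing Implicit Defensive.
Import Order.TTheory GRing.Theory Num.Theory.
Definition blk (A : Type) (u v : A) (b : bool) := if b then u else v.
Definition word (T : Type) (u v : seq T) s := flatten [seq blk u v b | b <- s].

Lemma word_cat T (u v : seq T) s t : word u v (s ++ t) = word u v s ++ word u v t.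
Proof. by rewrite /word map_cat flatten_cat. Qed.
Lemma word1 T (u v : seq T) b : word u v [:: b] = blk u v b.
Proof. by rewrite /word /= cats0. Qed.

Definition spow (A : Type) (s : seq A) m := flatten (nseq m s).
Lemma spowD A (s : seq A) a b : spow s (a + b) = spow s a ++ spow s b.
Proof. by rewrite /spow nseqD flatten_cat. Qed.
Lemma spowSr A (s : seq A) n : spow s n.+1 = spow s n ++ s.
Proof. by rewrite -addn1 spowD /spow /= cats0. Qed.
Lemma spowSl A (s : seq A) n : spow s n.+1 = s ++ spow s n.
Proof. by []. Qed.

Lemma kernel_lemma (T : finType) (f g : T -> T) :
  (forall x y, f x = f y -> g x = g y) ->
  #|[set f x | x : T]| <= #|[set g x | x : T]| ->
  forall x y, g x = g y -> f x = f y.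
Proof.
move=> hk hr x y gxy; apply/eqP; apply: contraT => nf.
pose phi a := g (odflt a [pick z | f z == a]).
have phiE z : phi (f z) = g z.
  rewrite /phi; case: pickP => [z' /eqP fz' | none] /=; first exact: hk.
  by have := none z; rewrite eqxx.
have sub : [set g z | z : T] \subset [set phi a | a in [set f z | z : T]].
  apply/subsetP => _ /imsetP [z _ ->]; rewrite -phiE; apply: imset_f.
  exact: imset_f.
have ninj : #|[set phi a | a in [set f z | z : T]]| != #|[set f z | z : T]|.
  apply/imset_injP => inj.
  have fx : f x \in [set f z | z : T] by apply/imsetP; exists x.
  have fy : f y \in [set f z | z : T] by apply/imsetP; exists y.
  have := inj _ _ fx fy.
  by rewrite !phiE gxy => /(_ erefl) /eqP; rewrite (negbTE nf).
have := leq_imset_card phi [set f z | z : T].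
rewrite leq_eqVlt (negbTE ninj) /= => lt.
have := subset_leq_card sub.
move=> h; have := leq_trans hr h; rewrite leqNgt lt. by [].
Qed.

Section Monoid.
Variable Sigma : finType.
Variable sim : rel (seq Sigma).
Hypothesis sim_refl : forall x, sim x x.
Hypothesis sim_sym : forall x y, sim x y -> sim y x.
Hypothesis sim_trans : forall x y z, sim x y -> sim y z -> sim x z.
Hypothesis sim_rc : forall x y z, sim x y -> sim (x ++ z) (y ++ z).
Variable reps : seq (seq Sigma).
Hypothesis hreps : forall w, exists2 r, r \in reps & sim w r.

Let N := size reps.
Definition cls w := find (sim w) reps.
Lemma has_cls w : has (sim w) reps.
Proof. by have [r hr hs] := hreps w; apply/hasP; exists r. Qed.
Lemma cls_lt w : cls w < N.
Proof. by rewrite /cls /N -has_find has_cls. Qed.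
Lemma cls_rep w : sim w (nth [::] reps (cls w)).
Proof. exact: nth_find (has_cls w). Qed.
Lemma cls_eq x y : sim x y -> cls x = cls y.
Proof.
move=> h; rewrite /cls; apply: eq_find => z; apply/idP/idP => hz.
  exact: sim_trans (sim_sym h) hz.
exact: sim_trans h hz.
Qed.
Lemma cls_sim x y : cls x = cls y -> sim x y.
Proof.
move=> e; apply: sim_trans (cls_rep x) _; rewrite e; apply: sim_sym; exact: cls_rep.
Qed.

Definition Tf z : {ffun 'I_N -> 'I_N} :=
  [ffun i : 'I_N => insubd i (cls (nth [::] reps i ++ z))].
Lemma TfE z i : val (Tf z i) = cls (nth [::] reps i ++ z).
Proof. by rewrite ffunE val_insubd cls_lt. Qed.
Definition clsO w : 'I_N := Ordinal (cls_lt w).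
Lemma cls_cat x z : cls (x ++ z) = val (Tf z (clsO x)).
Proof. by rewrite TfE; apply: cls_eq; apply: sim_rc; apply: cls_rep. Qed.
Lemma Tf_cat x y i : Tf (x ++ y) i = Tf y (Tf x i).
Proof.
apply: val_inj; rewrite TfE catA cls_cat; congr (val (Tf y _)).
by apply: val_inj; rewrite /= TfE.
Qed.

Variables u v : seq Sigma.
Definition G s := Tf (word u v s).
Lemma G_cat s t i : G (s ++ t) i = G t (G s i).
Proof. by rewrite /G word_cat Tf_cat. Qed.
Lemma G_congr s t z : G s = G t -> G (s ++ z) = G (t ++ z).
Proof. by move=> e; apply/ffunP => i; rewrite !G_cat e. Qed.

Definition rk s := #|[set G s i | i : 'I_N]|.
Lemma rk_cat s t : rk (s ++ t) <= rk t.
Proof.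
apply: subset_leq_card; apply/subsetP => _ /imsetP [i _ ->].
by rewrite G_cat; apply: imset_f.
Qed.

Lemma exists_min : exists s0, forall s, rk (s0 ++ [:: true]) <= rk (s ++ [:: true]).
Proof.
suff H : forall k, (exists s, rk (s ++ [:: true]) <= k) ->
  exists s0, forall s, rk (s0 ++ [:: true]) <= rk (s ++ [:: true]).
  by apply: (H (rk [:: true])); exists [::].
elim=> [|k IH] [s hs].
  by exists s => s'; apply: leq_trans hs _.
case: (classic (exists s', rk (s' ++ [:: true]) <= k)) => [h|h]; first exact: IH.
exists s => s'; apply: leq_trans hs _; rewrite ltnNge; apply/negP => h'.
by apply: h; exists s'.
Qed.

Lemma idem s : exists m, 0 < m /\ G (spow s m ++ spow s m) = G (spow s m).
Proof.
pose f (k : 'I_#|{: {ffun 'I_N -> 'I_N}}|.+1) := G (spow s k.+1).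
have : ~~ injectiveb f.
  apply/injectiveP => inj; have := leq_card f inj.
  by rewrite card_ord ltnn.
case/injectivePn => x [y nxy exy].
have key : forall a b, 0 < a < b -> G (spow s a) = G (spow s b) ->
    exists m, 0 < m /\ G (spow s m ++ spow s m) = G (spow s m).
  move=> a b /andP [a0 ab] e.
  have et : forall t, G (spow s (a + t)) = G (spow s (b + t)).
    by move=> t; rewrite !spowD; apply: G_congr.
  set p := b - a.
  have eq : forall q, G (spow s (a + q * p)) = G (spow s a).
    elim=> [|q IHq]; first by rewrite mul0n addn0.
    have -> : a + q.+1 * p = b + q * p by rewrite /p mulSn; lia.
    by rewrite -et.
  exists (a * p); split; first by rewrite muln_gt0 a0 /p subn_gt0.
  rewrite -spowD (_ : a * p + a * p = (a + a * p) + (a * p - a)); last first.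
    have : a <= a * p by rewrite leq_pmulr // /p subn_gt0.
    lia.
  rewrite spowD (G_congr _ (eq a)) -spowD; congr (G (spow s _)).
  have : a <= a * p by rewrite leq_pmulr // /p subn_gt0.
  lia.
case: (ltngtP x y) => hxy; last by move: nxy; rewrite (ord_inj hxy) eqxx.
  by apply: (key x.+1 y.+1) => //.
by apply: (key y.+1 x.+1) => //.
Qed.

Lemma part2 : exists sU sV, (exists p, sU = p ++ [:: true]) /\
  (exists q, sV = q ++ [:: false]) /\
  forall s, G (flatten [seq blk sU sV b | b <- s] ++ sU) = G sU.
Proof.
have [s0 min0] := exists_min.
set U0 := s0 ++ [:: true].
have [m [m0 idU]] := idem U0.
set sU := spow U0 m.
have sUe : sU = (spow U0 m.-1 ++ s0) ++ [:: true].
  by rewrite /sU -(prednK m0) spowSr /U0 catA.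
have minU : forall s, rk sU <= rk (s ++ [:: true]).
  move=> s; apply: leq_trans (min0 s); rewrite sUe -catA; exact: rk_cat.
have [m' [m0' idV]] := idem (sU ++ [:: false]).
set sV := spow (sU ++ [:: false]) m'.
have sVe : sV = spow (sU ++ [:: false]) m'.-1 ++ sU ++ [:: false].
  by rewrite /sV -(prednK m0') spowSr.
have sVl : sV = sU ++ ([:: false] ++ spow (sU ++ [:: false]) m'.-1).
  by rewrite /sV -(prednK m0') spowSl -catA.
have hVU : G (sV ++ sU) = G sU.
  have hk : forall x y, G sU x = G sU y -> G (sV ++ sU) x = G (sV ++ sU) y.
    by move=> x y e; rewrite sVl -catA !G_cat e.
  have hr : rk sU <= rk (sV ++ sU).
    by rewrite {2}sUe catA; apply: minU.
  have := kernel_lemma hk hr => kl.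
  apply/ffunP => x; rewrite G_cat; apply: kl.
  by rewrite !G_cat -(G_cat sV sV) idV.
exists sU, sV; split; first by exists (spow U0 m.-1 ++ s0).
split; first by exists (spow (sU ++ [:: false]) m'.-1 ++ sU); rewrite sVe catA.
elim=> [|b s IH] //=.
apply/ffunP => i; rewrite -catA G_cat IH -G_cat.
by case: b; rewrite /blk ?idU ?hVU.
Qed.
End Monoid.

Lemma bern (R : realType) (x : R) (k : nat) : (0 <= x)%R ->
  ((1 + x) ^+ k * (1 - k%:R * x) <= 1)%R.
Proof.
move=> x0; elim: k => [|k IH]; first by rewrite expr0 mul0r subr0 mul1r.
have h : ((1 + x) * (1 - k.+1%:R * x) <= 1 - k%:R * x)%R.
  have k0 : (0 <= k%:R :> R)%R by [].
  rewrite -natr1; nra.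
rewrite exprSr -mulrA; apply: le_trans IH.
by rewrite ler_wpM2l // exprn_ge0 // addr_ge0.
Qed.

Lemma exists_c (R : realType) (M : nat) : 0 < M ->
  exists c : R, (1 < c)%R /\ (c ^+ M <= 2)%R.
Proof.
move=> M0; exists (1 + (M.*2)%:R^-1)%R; split.
  by rewrite ltrDl invr_gt0 ltr0n double_gt0.
have x0 : (0 <= (M.*2)%:R^-1 :> R)%R by rewrite invr_ge0.
have := bern M x0.
have -> : (1 - M%:R * (M.*2)%:R^-1 = 2^-1 :> R)%R.
  rewrite -muln2 natrM invfM mulrA mulfV ?mul1r; last by rewrite pnatr_eq0 -lt0n.
  lra.
move=> h.
have h2 : (0 < 2^-1 :> R)%R by rewrite invr_gt0.
rewrite -(ler_pM2r h2) mulfV //.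
by rewrite pnatr_eq0.
Qed.

Section Words.
Variable Sigma : finType.
Implicit Types (u v x y : seq Sigma) (s t : seq bool).


Lemma word_rcons u v s b : word u v (rcons s b) = word u v s ++ blk u v b.
Proof. by rewrite -cats1 word_cat /word /= cats0. Qed.
Lemma size_word u v s : size (word u v s) <= size s * maxn (size u) (size v).
Proof.
elim: s => [|b s IH] //=; rewrite size_cat mulSn leq_add //.
by case: b; rewrite /blk ?leq_maxl ?leq_maxr.
Qed.

Lemma star_word u v w : in_star2 u v w <-> exists s, w = word u v s.
Proof. by []. Qed.

Lemma mem_words_upto n x : size x <= n -> x \in words_upto Sigma n.
Proof.
move=> hx; rewrite /words_upto; apply/flattenP.
exists [seq val tu | tu <- enum {: (size x).-tuple Sigma}].
  by apply/mapP; exists (size x); rewrite // mem_iota.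
by apply/mapP; exists (in_tuple x); rewrite ?mem_enum.
Qed.

Lemma count_classes (r : rel (seq Sigma)) n (S : seq (seq Sigma)) :
  (forall x, r x x) -> uniq S -> (forall x, x \in S -> size x <= n) ->
  (forall x y, x \in S -> y \in S -> x != y -> ~~ r x y) ->
  size S <= num_classes r n.
Proof.
move=> refl uS szS sep; rewrite /num_classes.
set W := words_upto Sigma n; set f := fun x => [seq y <- W | r x y].
rewrite -(size_map f); apply: uniq_leq_size.
  rewrite map_inj_in_uniq // => x y xS yS fxy.
  apply/eqP; apply: contraT => nxy.
  have : x \in f y by rewrite -fxy mem_filter refl mem_words_upto ?szS.
  by rewrite mem_filter (negbTE (sep _ _ yS xS _)) // eq_sym.
move=> z /mapP [x xS ->]; rewrite mem_undup; apply: map_f.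
by rewrite mem_words_upto ?szS.
Qed.

Variable sim : rel (seq Sigma).
Hypothesis sim_sym : forall x y, sim x y -> sim y x.
Variables u1 u2 v1 v2 : seq Sigma.
Hypothesis hsz : size u2 = size v2.
Hypothesis hpos : 1 <= size u2.
Hypothesis hcrit : forall s,
  ~~ sim (u2 ++ word (u1 ++ u2) (v1 ++ v2) s) (v2 ++ word (u1 ++ u2) (v1 ++ v2) s).

Local Notation wd := (word (u1 ++ u2) (v1 ++ v2)).

Lemma size_blk_pos b : 0 < size (blk (u1 ++ u2) (v1 ++ v2) b).
Proof. by case: b; rewrite /blk size_cat ?hsz -?hsz; apply: leq_trans hpos (leq_addl _ _). Qed.

Lemma sep_words s t r : s != t -> size (wd s) = size (wd t) ->
  exists2 i, i < size (wd (s ++ r)) &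
    ~~ sim (drop i (wd (s ++ r))) (drop i (wd (t ++ r))).
Proof.
elim/last_ind: s t r => [|s a IH] t r.
  case/lastP: t => [|t c] //= _; rewrite word_rcons size_cat.
  by have := size_blk_pos c; case: (size (blk _ _ c)) => // k _; rewrite addnS.
case/lastP: t => [|t c] hst.
  rewrite word_rcons size_cat /=.
  by have := size_blk_pos a; case: (size (blk _ _ a)) => // k _; rewrite addnS.
rewrite !word_rcons !size_cat => hsize.
have [eac|nac] := eqVneq a c.
  rewrite -eac in hst hsize *.
  have hst' : s != t by apply: contra hst => /eqP ->.
  have hs' : size (wd s) = size (wd t) by apply/eqP; rewrite -(eqn_add2r (size (blk (u1 ++ u2) (v1 ++ v2) a))) hsize.
  have [i hi hn] := IH t (a :: r) hst' hs'.
  exists i; by rewrite -!cats1 -!catA.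
rewrite -!cats1 -!catA !word_cat !word1 /blk.
case: a c nac hst hsize => [] [] // _ _; rewrite /blk => hsize.
- exists (size (wd s) + size u1).
    rewrite !size_cat; move: hpos; lia.
  rewrite (_ : wd s ++ (u1 ++ u2) ++ wd r = (wd s ++ u1) ++ (u2 ++ wd r)); last by rewrite !catA.
  rewrite (_ : wd t ++ (v1 ++ v2) ++ wd r = (wd t ++ v1) ++ (v2 ++ wd r)); last by rewrite !catA.
  rewrite drop_size_cat ?size_cat // drop_size_cat ?size_cat; first exact: hcrit.
  by move: hsize; rewrite !size_cat hsz; lia.
- exists (size (wd s) + size v1).
    rewrite !size_cat; move: hpos; rewrite hsz; lia.
  rewrite (_ : wd s ++ (v1 ++ v2) ++ wd r = (wd s ++ v1) ++ (v2 ++ wd r)); last by rewrite !catA.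
  rewrite (_ : wd t ++ (u1 ++ u2) ++ wd r = (wd t ++ u1) ++ (u2 ++ wd r)); last by rewrite !catA.
  rewrite drop_size_cat ?size_cat // drop_size_cat ?size_cat.
    apply/negP => /sim_sym; apply/negP; apply: hcrit.
  by move: hsize; rewrite !size_cat hsz; lia.
Qed.

Hypothesis sim_refl : forall x, sim x x.

Lemma growth (R : realType) : exp_growth R (num_classes (suffix_expansion sim)).
Proof.
set M := maxn (size (u1 ++ u2)) (size (v1 ++ v2)).
have M0 : 0 < M.
  apply: leq_trans hpos _; apply: leq_trans (leq_maxl _ _).
  by rewrite size_cat leq_addl.
have [c [c1 cM]] := exists_c R M0.
exists c; split => // N; exists (N * M); split; first by rewrite leq_pmulr.
set S := [seq wd (val b) | b <- enum {: N.-tuple bool}].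
have hS : size S <= num_classes (suffix_expansion sim) (N * M).
  apply: count_classes.
  - by move=> x; rewrite /suffix_expansion eqxx /=; apply/forallP => i; exact: sim_refl.
  - rewrite map_inj_in_uniq ?enum_uniq // => b1 b2 _ _ e.
    apply: val_inj; apply/eqP; apply: contraT => ne.
    have [i hi hn] := sep_words [::] ne (congr1 size e).
    by move: hn; rewrite !cats0 e sim_refl.
  - move=> x /mapP [b _ ->]; apply: leq_trans (size_word _ _ _) _.
    by rewrite size_tuple.
  - move=> x y /mapP [b1 _ ->] /mapP [b2 _ ->] ne.
    have ne' : val b1 != val b2 by apply: contra ne => /eqP ->.
    rewrite /suffix_expansion; apply/negP => /andP [/eqP hs /forallP hf].
    have [i hi hn] := sep_words [::] ne' hs.
    rewrite !cats0 in hi hn.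
    by have := hf (Ordinal hi); rewrite (negbTE hn).
move: hS; rewrite size_map -cardE card_tuple card_bool => hS.
have c0 : (0 <= c)%R by apply: le_trans (ltW c1).
apply: (@le_trans _ _ (2 ^+ N)%R).
  rewrite mulnC exprM; have := @lerXn2r R N (c ^+ M)%R 2%R; rewrite !nnegrE exprn_ge0 //; move=> h; exact: h.

have -> : (2 ^+ N = (2 ^ N)%:R :> R)%R by rewrite natrX.
by rewrite ler_nat.
Qed.
End Words.

Lemma word_flatten (T : Type) (u v : seq T) sU sV (s : seq bool) :
  flatten [seq if b then word u v sU else word u v sV | b <- s] =
  word u v (flatten [seq blk sU sV b | b <- s]).
Proof. by elim: s => [|b s IH] //=; rewrite word_cat IH; case: b. Qed.

Theorem proposition15 (Sigma : finType) (R : realType) (sim : rel (seq Sigma)) :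
  right_congruence sim -> finite_index sim ->
  (exists u2 v2 u v : seq Sigma, critical_tuple sim u2 v2 u v) ->
  exp_growth R (num_classes (suffix_expansion sim)) /\
  exists u2 v2 u v : seq Sigma, critical_tuple sim u2 v2 u v /\
    forall w, in_star2 u v w ->
      sim (u2 ++ u) (u2 ++ w ++ u) /\ sim (v2 ++ u) (v2 ++ w ++ u).
Proof.
move=> [refl sym trans rc] [reps hreps] [u2 [v2 [u [v [hsz hpos [u1 hu] [v1 hv] hcrit]]]]].
subst u v.
have hcrit' : forall s, ~~ sim (u2 ++ word (u1 ++ u2) (v1 ++ v2) s)
                              (v2 ++ word (u1 ++ u2) (v1 ++ v2) s).
  by move=> s; apply: hcrit; exists s.
split. have := @growth _ _ sym _ _ _ _ hsz hpos hcrit' refl R. exact.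
have [sU [sV [[p hp] [[q hq] hG]]]] := part2 sym trans rc hreps (u1 ++ u2) (v1 ++ v2).
set W := word (u1 ++ u2) (v1 ++ v2).
exists u2, v2, (W sU), (W sV); split.
  split => //.
  - by exists (W p ++ u1); rewrite hp /W word_cat word1 /blk catA.
  - by exists (W q ++ v1); rewrite hq /W word_cat word1 /blk catA.
  - move=> w [s ->]; rewrite /W word_flatten; apply: hcrit.
    by exists (flatten [seq blk sU sV b | b <- s]).
move=> w [s ->]; rewrite /W word_flatten -word_cat.
have e : forall x, sim (x ++ W sU)
    (x ++ word (u1 ++ u2) (v1 ++ v2) (flatten [seq blk sU sV b | b <- s] ++ sU)).
  move=> x; apply: (cls_sim sym trans hreps).
  rewrite !(cls_cat sym trans rc hreps).
  by have := hG s; rewrite /G => ->.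
by split; apply: e.
Qed.
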